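(* Suppose the joint distribution of $(Y,X,W_1)$ is known, $\operatorname{cov}(W_1,X)\ne 0$, normalize $\operatorname{var}(X)=1$, $\operatorname{var}(W_1)=I_{d_1}$, $\operatorname{var}(W_2)=1$, suppose $\sigma_{W_1,Y}$ and $\sigma_{W_1,X}$ are linearly independent and $d_1\ge 2$. Let $\underline b\in\mathbb R$, $\bar r_X\ge0$, $[\underline c,\bar c]\subseteq[0,1]$, and define $\bar r_Y^{\text{bf}}(\bar r_X,\underline c,\bar c,\underline b)=\inf\{\bar r_Y\ge 0: b\in\mathcal B_I(\bar r_X,\bar r_Y,\underline c,\bar c)\text{ for some } b\le\underline b\}$. Let $\underline B(\bar r_X,\underline c,\bar c)=\inf\mathcal B_I(\bar r_X,\underline c,\bar c)$. Then: (1) If $\underline b\ge\beta_{\text{med}}$, then $\bar r_Y^{\text{bf}}=0$. (2) If $\underline B(\bar r_X,\underline c,\bar c)>\underline b$, then $\bar r_Y^{\text{bf}}=+\infty$. (3) If $\underline B(\bar r_X,\underline c,\bar c)\le\underline b<\beta_{\text{med}}$, then $\bar r_Y^{\text{bf}}(\bar r_X,\underline c,\bar c,\underline b)$ equals the infimum of $\underline r_Y(z,c_1\sigma_{W_1,Y}+c_2\sigma_{W_1,X},b)$ over $(z,c_1,c_2,b)\in(-\sqrt{k_0},\sqrt{k_0})\times\mathbb R\times\mathbb R\times(-\infty,\underline b]$ subject to $p(z,c_1\sigma_{W_1,Y}+c_2\sigma_{W_1,X};\bar r_X)\ge0$, $(b-\beta_{\text{med}})^2<\text{devsq}(z)$,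 and $\|c_1\sigma_{W_1,Y}+c_2\sigma_{W_1,X}\|\in[\underline c,\bar c]\cap[0,1)$.
   Context: Let $(Y,X,W_1,W_2)$ be a random vector with finite second moments, $Y,X\in\mathbb R$, $W_1\in\mathbb R^{d_1}$, $W_2\in\mathbb R$. For random vectors $A,B$ with $\operatorname{var}(B)$ invertible, $A^{\perp B}=A-\operatorname{cov}(A,B)\operatorname{var}(B)^{-1}B$. $\beta_{\text{long}},\gamma_1,\gamma_2$: coefficients on $X,W_1,W_2$ in the linear projection of $Y$ on $(1,X,W_1,W_2)$; $\pi_1,\pi_2$: coefficients on $W_1,W_2$ in the linear projection of $X$ on $(1,W_1,W_2)$; $\beta_{\text{med}}$: coefficient on $X$ in the linear projection of $Y$ on $(1,X,W_1)$. $\sigma_{A,B}=\operatorname{cov}(A,B)$; $\Sigma_{\text{obs}}=\operatorname{var}(W_1)$; $c=\operatorname{cov}(W_1,W_2)$; $R_{W_2\sim W_1}=\sqrt{c'\Sigma_{\text{obs}}^{-1}c/\operatorname{var}(W_2)}$. $k_0=\operatorname{var}(X^{\perp W_1})$, $k_1=\operatorname{cov}(Y^{\perp W_1},X^{\perp W_1})$ (so $\beta_{\text{med}}=k_1/k_0$). Assumptions: (A1) $\operatorname{var}(Y,X,W_1,W_2)$ positive definite; (A-rx) $\sqrt{\operatorname{var}(\pi_2W_2)}\le\bar r_X\sqrt{\operatorname{var}(\pi_1'W_1)}$; (A-ry) $\sqrt{\operatorname{var}(\gamma_2W_2)}\le\bar r_Y\sqrt{\operatorname{var}(\gamma_1'W_1)}$;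 (A-c) $R_{W_2\sim W_1}\in[\underline c,\bar c]$. $\mathcal B_I(\bar r_X,\bar r_Y,\underline c,\bar c)$ is the set of $b$ for which there is a random vector $(\tilde Y,\tilde X,\tilde W_1,\tilde W_2)$ with $(\tilde Y,\tilde X,\tilde W_1)\overset{d}{=}(Y,X,W_1)$, $\tilde W_2$ scalar with variance 1, satisfying (A1), (A-rx), (A-ry), (A-c), with $\beta_{\text{long}}=b$; $\mathcal B_I(\bar r_X,\underline c,\bar c)$ is the same without (A-ry). Functions: $\text{devsq}(z)=\frac{\operatorname{var}(Y^{\perp X,W_1})}{k_0}\frac{z^2}{k_0-z^2}$; $p(z,c;\bar r_X)=\bar r_X^2\|\sigma_{W_1,X}\sqrt{1-\|c\|^2}-zc\|^2-z^2$; for $z\in\mathbb R$, $\|c\|<1$, $b\in\mathbb R$, let $v(z,c,b)=z\sqrt{1-\|c\|^2}(\sigma_{W_1,Y}-b\sigma_{W_1,X})-(k_1-bk_0)c$, and $\underline r_Y(z,c,b)=|k_1-bk_0|/\|v(z,c,b)\|$ if $v(z,c,b)\neq0$, $\underline r_Y(z,c,b)=+\infty$ if $v(z,c,b)=0$ (and $b\ne\beta_{\text{med}}$). *)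

(* Defs.v *)
From HB Require Import structures.
From mathcomp Require Import all_boot all_order all_algebra.
From mathcomp Require Import all_classical all_reals all_analysis.

Set Implicit Arguments.
Unset Strict Implicit.
Unset Printing Implicit Defensive.

Import Order.TTheory GRing.Theory Num.Theory.
Local Open Scope ring_scope.

Section OVB.
Variables (R : realType) (d : nat).

(* Second moments of the observed vector (Y, X, W1). *)
Record obsmom := Obs {
  vY : R;            (* var(Y) *)
  vX : R;            (* var(X) *)
  cXY : R;           (* cov(X,Y) *)
  sWY : 'cV[R]_d;    (* sigma_{W1,Y} = cov(W1,Y) *)
  sWX : 'cV[R]_d;    (* sigma_{W1,X} = cov(W1,X) *)
  SW : 'M[R]_d       (* Sigma_obs = var(W1) *)
}.

(* Second moments involving the unobserved scalar W2. *)
Record extmom := Ext {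
  sY2 : R;           (* cov(Y,W2) *)
  sX2 : R;           (* cov(X,W2) *)
  cW : 'cV[R]_d;     (* c = cov(W1,W2) *)
  v2 : R             (* var(W2) *)
}.

Definition qf n (a : 'cV[R]_n) (M : 'M[R]_n) (b : 'cV[R]_n) : R := (a^T *m M *m b) 0 0.
Definition nrm2 n (a : 'cV[R]_n) : R := (a^T *m a) 0 0.
Definition nrm n (a : 'cV[R]_n) : R := Num.sqrt (nrm2 a).

Definition posdef n (M : 'M[R]_n) : Prop :=
  M^T = M /\ forall v : 'cV[R]_n, v != 0 -> 0 < qf v M v.

(* linear-projection coefficients (on the non-constant regressors) *)
Definition lpcoef n (V : 'M[R]_n) (s : 'cV[R]_n) : 'cV[R]_n := invmx V *m s.

Definition obscov (o : obsmom) : 'M[R]_(1 + (1 + d)) :=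
  block_mx (vY o)%:M (row_mx (cXY o)%:M (sWY o)^T)
           (col_mx (cXY o)%:M (sWY o))
           (block_mx (vX o)%:M (sWX o)^T (sWX o) (SW o)).

Definition wcov (o : obsmom) (e : extmom) : 'M[R]_(d + 1) :=
  block_mx (SW o) (cW e) (cW e)^T (v2 e)%:M.
Definition wXcov (o : obsmom) (e : extmom) : 'cV[R]_(d + 1) :=
  col_mx (sWX o) (sX2 e)%:M.
Definition regcov (o : obsmom) (e : extmom) : 'M[R]_(1 + (d + 1)) :=
  block_mx (vX o)%:M (wXcov o e)^T (wXcov o e) (wcov o e).
Definition regYcov (o : obsmom) (e : extmom) : 'cV[R]_(1 + (d + 1)) :=
  col_mx (cXY o)%:M (col_mx (sWY o) (sY2 e)%:M).
Definition fullcov (o : obsmom) (e : extmom) : 'M[R]_(1 + (1 + (d + 1))) :=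
  block_mx (vY o)%:M (regYcov o e)^T (regYcov o e) (regcov o e).

(* projection of Y on (1, X, W1, W2) *)
Definition longcoef o e := lpcoef (regcov o e) (regYcov o e).
Definition beta_long o e : R := (usubmx (longcoef o e)) 0 0.
Definition gamma1 o e : 'cV[R]_d := usubmx (dsubmx (longcoef o e)).
Definition gamma2 o e : R := (dsubmx (dsubmx (longcoef o e))) 0 0.
(* projection of X on (1, W1, W2) *)
Definition picoef o e := lpcoef (wcov o e) (wXcov o e).
Definition pi1 o e : 'cV[R]_d := usubmx (picoef o e).
Definition pi2 o e : R := (dsubmx (picoef o e)) 0 0.

Definition RW2W1 o e : R := Num.sqrt (qf (cW e) (invmx (SW o)) (cW e) / v2 e).

Definition A_rx o e (rX : R) : Prop :=
  Num.sqrt ((pi2 o e) ^+ 2 * v2 e) <= rX * Num.sqrt (qf (pi1 o e) (SW o) (pi1 o e)).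
Definition A_ry o e (rY : R) : Prop :=
  Num.sqrt ((gamma2 o e) ^+ 2 * v2 e) <= rY * Num.sqrt (qf (gamma1 o e) (SW o) (gamma1 o e)).
Definition A_c o e (cl cu : R) : Prop := cl <= RW2W1 o e <= cu.

Definition BI (o : obsmom) (rX rY cl cu : R) : set R :=
  [set b | exists e : extmom, v2 e = 1 /\ posdef (fullcov o e) /\
     A_rx o e rX /\ A_ry o e rY /\ A_c o e cl cu /\ beta_long o e = b].
Definition BI_x (o : obsmom) (rX cl cu : R) : set R :=
  [set b | exists e : extmom, v2 e = 1 /\ posdef (fullcov o e) /\
     A_rx o e rX /\ A_c o e cl cu /\ beta_long o e = b].

Definition xwcov (o : obsmom) : 'M[R]_(1 + d) :=
  block_mx (vX o)%:M (sWX o)^T (sWX o) (SW o).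
Definition xwYcov (o : obsmom) : 'cV[R]_(1 + d) := col_mx (cXY o)%:M (sWY o).
(* coefficient on X in the projection of Y on (1, X, W1) *)
Definition beta_med o : R := (usubmx (lpcoef (xwcov o) (xwYcov o))) 0 0.
Definition k0 o : R := vX o - qf (sWX o) (invmx (SW o)) (sWX o).
Definition k1 o : R := cXY o - qf (sWX o) (invmx (SW o)) (sWY o).
Definition varYperp o : R := vY o - qf (xwYcov o) (invmx (xwcov o)) (xwYcov o).

Definition devsq o (z : R) : R := varYperp o / k0 o * (z ^+ 2 / (k0 o - z ^+ 2)).
Definition pfun o (z : R) (c : 'cV[R]_d) (rX : R) : R :=
  rX ^+ 2 * nrm2 (Num.sqrt (1 - nrm c ^+ 2) *: sWX o - z *: c) - z ^+ 2.
Definition vfun o (z : R) (c : 'cV[R]_d) (b : R) : 'cV[R]_d :=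
  (z * Num.sqrt (1 - nrm c ^+ 2)) *: (sWY o - b *: sWX o) - (k1 o - b * k0 o) *: c.
Definition rY_low o (z : R) (c : 'cV[R]_d) (b : R) : \bar R :=
  if vfun o z c b != 0 then (`|k1 o - b * k0 o| / nrm (vfun o z c b))%:E else +oo%E.

Definition rY_bf o (rX cl cu bl : R) : \bar R :=
  ereal_inf [set (r%:E)%E | r in [set r : R | 0 <= r /\ exists b, b <= bl /\ BI o rX r cl cu b]].
Definition B_low o (rX cl cu : R) : \bar R :=
  ereal_inf [set (b%:E)%E | b in BI_x o rX cl cu].

Definition rY_opt o (rX cl cu bl : R) : \bar R :=
  ereal_inf [set x : \bar R | exists z c1 c2 b : R,
     let c := c1 *: sWY o + c2 *: sWX o in
     [/\ - Num.sqrt (k0 o) < z < Num.sqrt (k0 o), b <= bl,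
         0 <= pfun o z c rX, (b - beta_med o) ^+ 2 < devsq o z &
         [/\ cl <= nrm c <= cu, nrm c < 1 & x = rY_low o z c b]]].

End OVB.

(* Main.v *)
Require Import Defs.
From HB Require Import structures.
From mathcomp Require Import all_boot all_order all_algebra.
From mathcomp Require Import all_classical all_reals all_analysis.
From mathcomp Require Import ring lra.
Import Order.TTheory GRing.Theory Num.Theory.
Local Open Scope ring_scope.
Set Implicit Arguments.
Unset Strict Implicit.
Unset Printing Implicit Defensive.
Section Dot.
Variable R : realType.

Definition dot n (u v : 'cV[R]_n) : R := (u^T *m v) 0 0.

Lemma dotE n (u v : 'cV[R]_n) : dot u v = \sum_i u i 0 * v i 0.
Proof. by rewrite /dot !mxE; apply: eq_bigr => i _; rewrite mxE. Qed.

Lemma dotC n (u v : 'cV[R]_n) : dot u v = dot v u.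
Proof. by rewrite !dotE; apply: eq_bigr => i _; rewrite mulrC. Qed.

Lemma dotDl n (u w v : 'cV[R]_n) : dot (u + w) v = dot u v + dot w v.
Proof. by rewrite !dotE -big_split; apply: eq_bigr => i _; rewrite mxE mulrDl. Qed.
Lemma dotDr n (u w v : 'cV[R]_n) : dot v (u + w) = dot v u + dot v w.
Proof. by rewrite dotC dotDl !(dotC v). Qed.
Lemma dotZl n k (u v : 'cV[R]_n) : dot (k *: u) v = k * dot u v.
Proof. by rewrite !dotE mulr_sumr; apply: eq_bigr => i _; rewrite mxE mulrA. Qed.
Lemma dotZr n k (u v : 'cV[R]_n) : dot v (k *: u) = k * dot v u.
Proof. by rewrite dotC dotZl dotC. Qed.
Lemma dotNl n (u v : 'cV[R]_n) : dot (- u) v = - dot u v.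
Proof. by rewrite -scaleN1r dotZl mulN1r. Qed.
Lemma dotNr n (u v : 'cV[R]_n) : dot v (- u) = - dot v u.
Proof. by rewrite dotC dotNl dotC. Qed.
Lemma dot0l n (v : 'cV[R]_n) : dot 0 v = 0.
Proof. by rewrite dotE big1 // => i _; rewrite mxE mul0r. Qed.
Lemma dot0r n (v : 'cV[R]_n) : dot v 0 = 0.
Proof. by rewrite dotC dot0l. Qed.
Lemma dot_ge0 n (v : 'cV[R]_n) : 0 <= dot v v.
Proof. by rewrite dotE sumr_ge0 // => i _; rewrite -expr2 sqr_ge0. Qed.
Lemma dot_eq0 n (v : 'cV[R]_n) : dot v v = 0 -> v = 0.
Proof.
rewrite dotE => /eqP; rewrite psumr_eq0 => [/allP H|i _]; last by rewrite -expr2 sqr_ge0.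
apply/matrixP => i j; rewrite ord1 mxE.
by have /(_ (mem_index_enum i)) := H i; rewrite /= -expr2 sqrf_eq0 => /eqP.
Qed.
Lemma nrm2E n (v : 'cV[R]_n) : nrm2 v = dot v v. Proof. by []. Qed.
Lemma qf1 n (u v : 'cV[R]_n) : qf u 1%:M v = dot u v.
Proof. by rewrite /qf mulmx1. Qed.
End Dot.
Lemma qf_block (R : realType) m n (u : 'cV[R]_m) (w : 'cV[R]_n) A B C D :
  qf (col_mx u w) (block_mx A B C D) (col_mx u w) =
  qf u A u + (u^T *m B *m w) 0 0 + (w^T *m C *m u) 0 0 + qf w D w.
Proof.
by rewrite /qf tr_col_mx mul_row_block mul_row_col !mulmxDl !mxE; ring.
Qed.

Lemma qf_sc (R : realType) (x a : R) : qf (x%:M : 'cV_1) a%:M x%:M = x ^+ 2 * a.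
Proof. by rewrite /qf tr_scalar_mx !mul_scalar_mx scale_scalar_mx !mxE big_ord1 !mxE /= mulr1n; ring. Qed.

Lemma sc_row_col (R : realType) n (x : R) (u w : 'cV[R]_n) :
  ((x%:M : 'cV_1)^T *m u^T *m w) 0 0 = x * dot u w.
Proof. by rewrite tr_scalar_mx mul_scalar_mx -scalemxAl mxE. Qed.

Lemma col_row_sc (R : realType) n (x : R) (u w : 'cV[R]_n) :
  (w^T *m u *m (x%:M : 'cV_1)) 0 0 = x * dot w u.
Proof. by rewrite mul_mx_scalar mxE. Qed.

Lemma sumT (R : realType) n (u w : 'cV[R]_n) : \sum_j u^T 0 j * w j 0 = dot u w.
Proof. by rewrite /dot mxE. Qed.

Lemma Qfull (R : realType) d (o : obsmom R d) (e : extmom R d) tY tX tW t2 :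
  qf (col_mx tY%:M (col_mx tX%:M (col_mx tW t2%:M))) (fullcov o e)
     (col_mx tY%:M (col_mx tX%:M (col_mx tW t2%:M))) =
  tY^+2 * vY o + tX^+2 * vX o + qf tW (SW o) tW + t2^+2 * v2 e
  + 2*tY*tX*cXY o + 2*tY*dot (sWY o) tW + 2*tY*t2*sY2 e
  + 2*tX*dot (sWX o) tW + 2*tX*t2*sX2 e + 2*t2*dot (cW e) tW.
Proof.
rewrite /fullcov /regcov /regYcov /wcov /wXcov !qf_block !qf_sc.
rewrite !tr_col_mx !tr_scalar_mx !mul_scalar_mx -!scalemxAl !mul_row_col !mulmxDl !mul_mx_scalar.
rewrite ?mul_scalar_mx ?scalar_mxM.
rewrite !mxE /= !mulr1n !sumT !(dotC tW).
ring.
Qed.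

Lemma Qobs (R : realType) d (o : obsmom R d) tY tX tW :
  qf (col_mx tY%:M (col_mx tX%:M tW)) (obscov o) (col_mx tY%:M (col_mx tX%:M tW)) =
  tY^+2 * vY o + tX^+2 * vX o + qf tW (SW o) tW
  + 2*tY*tX*cXY o + 2*tY*dot (sWY o) tW + 2*tX*dot (sWX o) tW.
Proof.
rewrite /obscov !qf_block !qf_sc.
rewrite !tr_col_mx ?tr_row_mx !tr_scalar_mx ?trmxK !mul_scalar_mx -!scalemxAl !mul_row_col !mulmxDl !mul_mx_scalar.
rewrite ?mul_scalar_mx ?scalar_mxM.
rewrite !mxE /= !mulr1n !sumT !(dotC tW).
ring.
Qed.

Lemma qf_sub (R : realType) m n (w : 'cV[R]_n) (A : 'M[R]_m) B C D :
  qf (col_mx 0 w) (block_mx A B C D) (col_mx 0 w) = qf w D w.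
Proof. by rewrite qf_block /qf trmx0 !mul0mx mulmx0 !mxE add0r addr0 add0r. Qed.

Lemma pos_unit (R : realType) n (A : 'M[R]_n) :
  (forall v, v != 0 -> 0 < qf v A v) -> A \in unitmx.
Proof.
move=> H; rewrite unitmxE unitfE; apply/negP => /det0P [v v0 vA].
have := H v^T; rewrite -(inj_eq (@trmx_inj _ _ _)) trmxK trmx0 => /(_ v0).
by rewrite /qf trmxK vA mul0mx mxE ltxx.
Qed.

Ltac dexpH := rewrite ?(dotDl, dotDr, dotZl, dotZr, dotNl, dotNr).

Lemma dot_gt0 (R : realType) n (v : 'cV[R]_n) : v != 0 -> 0 < dot v v.
Proof.
move=> hv; rewrite lt_neqAle dot_ge0 andbT eq_sym; apply/eqP => /dot_eq0 h.
by rewrite h eqxx in hv.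
Qed.

Lemma le_eqr (R : realType) (x y : R) : 0 <= x -> x = y -> 0 <= y.
Proof. by move=> h <-. Qed.

Lemma reduce (R : realType) d (g a c : 'cV[R]_d) (t : R) :
  a != 0 -> (forall p q : R, p *: g + q *: a = 0 -> p = 0 /\ q = 0) ->
  exists c1 c2 : R, [/\ dot (c1 *: g + c2 *: a) (c1 *: g + c2 *: a) = dot c c,
     dot a (c1 *: g + c2 *: a) = dot a c &
     t * (dot g (c1 *: g + c2 *: a) - dot g c) <= 0].
Proof.
move=> ha hind.
pose A := dot a a; pose B := dot a g; pose G := dot g g.
pose Pg := dot g c; pose Pa := dot a c.
have hA : 0 < A by exact: dot_gt0.
pose D := A * G - B ^+ 2.
have hD : 0 < D.
  have hu : A *: g + (- B) *: a != 0.
    by apply/eqP => /hind [h _]; move: hA; rewrite h ltxx.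
  have := dot_gt0 hu; dexpH; rewrite /D -/A (dotC g a) -/B -/G => h.
  have : 0 < A * D by rewrite /D; apply: (lt_le_trans h); rewrite le_eqVlt; apply/orP; left; apply/eqP; ring.
  by rewrite pmulr_rgt0.
pose al := (A * Pg - B * Pa) / D.
pose be := (G * Pa - B * Pg) / D.
pose N := al ^+ 2 * G + 2 * al * be * B + be ^+ 2 * A.
have hDel : 0 <= dot c c - N.
  apply: (le_eqr (dot_ge0 (c - al *: g - be *: a))); dexpH.
  rewrite !(dotC c) (dotC g a) -/A -/B -/G -/Pg -/Pa /N /al /be.
  move: hD; rewrite /D => hD; field; lra.
pose X := Num.sqrt (al ^+ 2 * D ^+ 2 + A * D * (dot c c - N)).
have hp3 : 0 <= A * D * (dot c c - N) := mulr_ge0 (mulr_ge0 (ltW hA) (ltW hD)) hDel.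
have hp2 : 0 <= al ^+ 2 * D ^+ 2 by rewrite -exprMn sqr_ge0.
have hpos : 0 <= al ^+ 2 * D ^+ 2 + A * D * (dot c c - N) by lra.
have hX : X ^+ 2 = al ^+ 2 * D ^+ 2 + A * D * (dot c c - N) by rewrite sqr_sqrtr.
have hXa : `|al * D| <= X.
  by rewrite -sqrtr_sqr ler_sqrt // exprMn lerDl.
pose Y := if t <= 0 then X else - X.
have hY : Y ^+ 2 = al ^+ 2 * D ^+ 2 + A * D * (dot c c - N).
  by rewrite /Y; case: ifP => _; rewrite ?sqrrN hX.
have ht : t * (Y - al * D) <= 0.
  rewrite /Y; case: ifPn => ht.
    by rewrite mulr_le0_ge0 // subr_ge0 (le_trans (ler_norm _)).
  rewrite -ltNge in ht; rewrite pmulr_rle0 // subr_le0 lerNl.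
  by rewrite (le_trans _ hXa) // -normrN ler_norm.
pose mu := (Y - al * D) / (A * D).
exists (al + mu * A), (be - mu * B).
have hcc : dot c c = N + (Y ^+ 2 - al ^+ 2 * D ^+ 2) / (A * D).
  rewrite hY /N /al /be; move: hD; rewrite /D => hD; field; lra.
clearbody Y X.
split.
- dexpH; rewrite (dotC g a) -/A -/B -/G hcc /mu /N /al /be.
  move: hD; rewrite /D => hD; field; lra.
- dexpH; rewrite -/A -/B -/Pa /mu /al /be.
  move: hD; rewrite /D => hD; field; lra.
- have -> : dot g ((al + mu * A) *: g + (be - mu * B) *: a) - dot g c = (Y - al * D) / A.
    dexpH; rewrite (dotC g a) -/A -/B -/G -/Pg /mu /al /be.
    move: hD; rewrite /D => hD; field; lra.
  by rewrite mulrA pmulr_lle0 // invr_gt0.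
Qed.
Ltac sh := match goal with |- ?g => idtac g end.

Section Main.
Variables (R : realType) (d : nat) (o : obsmom R d).
Hypothesis hvX : vX o = 1.
Hypothesis hSW : SW o = 1%:M.

Definition sq (c : 'cV[R]_d) := Num.sqrt (1 - dot c c).
Definition mk (c : 'cV[R]_d) (z y : R) : extmom R d :=
  Ext (dot (sWY o) c + sq c * y) (dot (sWX o) c + sq c * z) c 1.

Lemma k0E : k0 o = 1 - dot (sWX o) (sWX o).
Proof. by rewrite /k0 hvX hSW invmx1 qf1. Qed.
Lemma k1E : k1 o = cXY o - dot (sWX o) (sWY o).
Proof. by rewrite /k1 hSW invmx1 qf1. Qed.

Lemma sq2 c : dot c c <= 1 -> sq c ^+ 2 = 1 - dot c c.
Proof. by move=> h; rewrite sqr_sqrtr // subr_ge0. Qed.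

Ltac dexp := rewrite ?(dotDl, dotDr, dotZl, dotZr, dotNl, dotNr).

Lemma Qsos c z y tY tX tW t2 : dot c c <= 1 ->
  qf (col_mx tY%:M (col_mx tX%:M (col_mx tW t2%:M))) (fullcov o (mk c z y))
     (col_mx tY%:M (col_mx tX%:M (col_mx tW t2%:M))) =
  dot (tW + tX *: sWX o + tY *: sWY o + t2 *: c) (tW + tX *: sWX o + tY *: sWY o + t2 *: c)
  + (sq c * t2 + z * tX + y * tY) ^+ 2 + (k0 o - z ^+ 2) * tX ^+ 2
  + 2 * (k1 o - z * y) * tX * tY + (vY o - dot (sWY o) (sWY o) - y ^+ 2) * tY ^+ 2.
Proof.
move=> hc; rewrite Qfull k0E k1E hvX hSW qf1 /=.
dexp.
rewrite !(dotC tW) !(dotC c (sWX o)) !(dotC c (sWY o)) (dotC (sWY o) (sWX o)).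
have h : dot c c = 1 - sq c ^+ 2 by rewrite sq2 // subKr.
rewrite h; ring.
Qed.

Lemma fullcov_sym e : (fullcov o e)^T = fullcov o e.
Proof.
rewrite /fullcov /regcov /wcov !tr_block_mx !tr_scalar_mx !trmxK hSW trmx1.
by [].
Qed.

Lemma vdec (v : 'cV[R]_(1 + (1 + (d + 1)))) :
  exists tY tX tW t2, v = col_mx tY%:M (col_mx tX%:M (col_mx tW t2%:M)).
Proof.
rewrite -(vsubmxK v) -(vsubmxK (dsubmx v)) -(vsubmxK (dsubmx (dsubmx v))).
rewrite (mx11_scalar (usubmx v)) (mx11_scalar (usubmx (dsubmx v))).
rewrite (mx11_scalar (dsubmx (dsubmx (dsubmx v)))).
by do 4 eexists.
Qed.

Definition bet z y := (k1 o - z * y) / (k0 o - z ^+ 2).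
Definition Lr z y := vY o - dot (sWY o) (sWY o) - y ^+ 2 - bet z y ^+ 2 * (k0 o - z ^+ 2).

Lemma mk_pd c z y : dot c c < 1 -> 0 < k0 o - z ^+ 2 -> 0 < Lr z y ->
  posdef (fullcov o (mk c z y)).
Proof.
move=> hc hk hL; split; first exact: fullcov_sym.
move=> v; have [tY [tX [tW [t2 ->]]]] := vdec v => hv.
have hs : 0 < sq c by rewrite /sq sqrtr_gt0 subr_gt0.
rewrite Qsos; last exact: ltW.
set w := tW + tX *: sWX o + tY *: sWY o + t2 *: c.
have E : (k0 o - z ^+ 2) * tX ^+ 2 + 2 * (k1 o - z * y) * tX * tY
   + (vY o - dot (sWY o) (sWY o) - y ^+ 2) * tY ^+ 2 =
   (k0 o - z ^+ 2) * (tX + bet z y * tY) ^+ 2 + Lr z y * tY ^+ 2.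
  rewrite /Lr /bet; field; lra.
have h1 := dot_ge0 w.
have h2 := sqr_ge0 (sq c * t2 + z * tX + y * tY).
have h3 : 0 <= (k0 o - z ^+ 2) * (tX + bet z y * tY) ^+ 2 by apply: mulr_ge0; [exact: ltW | exact: sqr_ge0].
have h4 : 0 <= Lr z y * tY ^+ 2 by apply: mulr_ge0; [exact: ltW | exact: sqr_ge0].
have [tY0|tY0] := eqVneq tY 0; last first.
  have : 0 < Lr z y * tY ^+ 2 by rewrite pmulr_rgt0 // exprn_even_gt0.
  lra.
have [tX0|tX0] := eqVneq tX 0; last first.
  have : 0 < (k0 o - z ^+ 2) * (tX + bet z y * tY) ^+ 2.
    by rewrite tY0 mulr0 addr0 pmulr_rgt0 // exprn_even_gt0.
  lra.
have [t20|t20] := eqVneq t2 0; last first.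
  have : 0 < (sq c * t2 + z * tX + y * tY) ^+ 2.
    by rewrite tY0 tX0 !mulr0 !addr0 exprn_even_gt0 // mulf_neq0 // gt_eqF.
  lra.
have [tW0|tW0] := eqVneq tW 0.
  by move: hv; rewrite tW0 tY0 tX0 t20 !raddf0 !col_mx0 eqxx.
have : dot w w != 0.
  apply/eqP => /dot_eq0; rewrite /w tY0 tX0 t20 !scale0r !addr0 => /eqP.
  by rewrite (negPf tW0).
lra.
Qed.

Lemma trmulE n (u w : 'cV[R]_n) : u^T *m w = (dot u w)%:M.
Proof. exact: mx11_scalar. Qed.

Lemma dot_sc (x y : R) : dot (x%:M : 'cV_1) y%:M = x * y.
Proof. by rewrite /dot tr_scalar_mx -scalar_mxM mxE eqxx mulr1n. Qed.

Lemma col_mx_neq0 m n (w : 'cV[R]_n) : w != 0 -> col_mx (0 : 'cV[R]_m) w != 0.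
Proof.
move=> hw; apply/eqP => h; move: hw; rewrite -[0 : 'cV_(m + n)]col_mx0 in h.
by have [_ ->] := eq_col_mx h; rewrite eqxx.
Qed.

Lemma sub_unit e : posdef (fullcov o e) ->
  regcov o e \in unitmx /\ wcov o e \in unitmx.
Proof.
move=> [_ hp]; split; apply: pos_unit => w hw.
  by have := hp _ (col_mx_neq0 1 hw); rewrite /fullcov qf_sub.
have := hp _ (col_mx_neq0 1 (col_mx_neq0 1 hw)).
by rewrite /fullcov qf_sub /regcov qf_sub.
Qed.

Lemma hs_pos c : dot c c < 1 -> 0 < sq c.
Proof. by move=> hc; rewrite /sq sqrtr_gt0 subr_gt0. Qed.

Lemma ccE c : dot c c < 1 -> dot c c = 1 - sq c ^+ 2.
Proof. by move=> hc; rewrite sq2 ?ltW // subKr. Qed.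

Lemma pi_mk c z y : dot c c < 1 -> posdef (fullcov o (mk c z y)) ->
  pi1 o (mk c z y) = sWX o - (z / sq c) *: c /\ pi2 o (mk c z y) = z / sq c.
Proof.
move=> hc hp; have [_ hu] := sub_unit hp.
have hs := hs_pos hc.
suff H : wcov o (mk c z y) *m col_mx (sWX o - (z / sq c) *: c) (z / sq c)%:M
   = wXcov o (mk c z y).
  by rewrite /pi1 /pi2 /picoef /lpcoef -H mulKmx // col_mxKu col_mxKd mxE eqxx mulr1n.
rewrite /wcov /wXcov /= mul_block_col hSW !mul1mx mul_mx_scalar trmulE subrK.
congr col_mx; rewrite -raddfD; congr (_%:M).
dexp; rewrite (ccE hc) (dotC c); field; lra.
Qed.

Definition nn c z y := (y - z * bet z y) / sq c.

Lemma long_mk c z y : dot c c < 1 -> 0 < k0 o - z ^+ 2 -> posdef (fullcov o (mk c z y)) ->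
  [/\ beta_long o (mk c z y) = bet z y,
      gamma1 o (mk c z y) = sWY o - bet z y *: sWX o - nn c z y *: c &
      gamma2 o (mk c z y) = nn c z y].
Proof.
move=> hc hk hp; have [hu _] := sub_unit hp.
have hs := hs_pos hc.
have hk' : 0 < 1 - dot (sWX o) (sWX o) - z ^+ 2 by rewrite -k0E.
suff H : regcov o (mk c z y) *m col_mx (bet z y)%:M
     (col_mx (sWY o - bet z y *: sWX o - nn c z y *: c) (nn c z y)%:M)
   = regYcov o (mk c z y).
  rewrite /beta_long /gamma1 /gamma2 /longcoef /lpcoef -H mulKmx //.
  by split; rewrite ?col_mxKu ?col_mxKd ?col_mxKu ?mxE ?eqxx ?mulr1n.
rewrite /regcov /wcov /wXcov /regYcov /= !mul_block_col hSW !mul1mx !mul_mx_scalar.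
rewrite tr_col_mx mul_row_col !trmulE dot_sc scale_col_mx add_col_mx scale_scalar_mx subrK.
congr col_mx; first by rewrite -!raddfD; congr (_%:M); dexp; rewrite /nn /bet k0E k1E hvX; field; lra.
congr col_mx; first by rewrite addrC subrK.
rewrite scale_scalar_mx -!raddfD; congr (_%:M).
dexp; rewrite /nn /bet (ccE hc) !(dotC c); field; lra.
Qed.

Lemma RW_mk c z y : RW2W1 o (mk c z y) = nrm c.
Proof. by rewrite /RW2W1 hSW invmx1 qf1 /= divr1. Qed.

Lemma lt_eqr (x y : R) : 0 < x -> x = y -> 0 < y.
Proof. by move=> h <-. Qed.

Lemma sc_inj n (x : R) : (x%:M : 'M[R]_n.+1) = 0 -> x = 0.
Proof. by move/matrixP => /(_ 0 0); rewrite !mxE eqxx mulr1n. Qed.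

Lemma vnz tY tX (tW : 'cV[R]_d) t2 :
  col_mx tY%:M (col_mx tX%:M (col_mx tW t2%:M)) = 0 ->
  [/\ tY = 0, tX = 0, tW = 0 & t2 = 0].
Proof.
rewrite -[0 : 'cV_(1 + _)]col_mx0 => /eq_col_mx [/sc_inj -> ].
rewrite -[0 : 'cV_(1 + _)]col_mx0 => /eq_col_mx [/sc_inj -> ].
by rewrite -[0 : 'cV_(d + 1)]col_mx0 => /eq_col_mx [-> /sc_inj ->].
Qed.

Lemma anal e : v2 e = 1 -> posdef (fullcov o e) ->
  exists z y, [/\ e = mk (cW e) z y, dot (cW e) (cW e) < 1,
     0 < k0 o - z ^+ 2 & 0 < Lr z y].
Proof.
case: e => sy sx c v /= hv; subst v; move=> [hsym hp].
have hc : dot c c < 1.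
  have hv0 : col_mx (0:R)%:M (col_mx (0:R)%:M (col_mx (- c) (1:R)%:M)) != 0.
    by apply/eqP => /vnz [_ _ _ /eqP]; rewrite oner_eq0.
  rewrite -subr_gt0; apply: (lt_eqr (hp _ hv0)); rewrite Qfull hvX hSW qf1 /=; dexp; ring.
have hs := hs_pos hc.
set z := (sx - dot (sWX o) c) / sq c.
set y := (sy - dot (sWY o) c) / sq c.
have He : Ext sy sx c 1 = mk c z y.
  by rewrite /mk /z /y; congr Ext; rewrite mulrC divfK ?gt_eqF // addrC subrK.
have hk : 0 < k0 o - z ^+ 2.
  have hv0 : col_mx (0:R)%:M (col_mx (1:R)%:M
      (col_mx (- (sWX o - (z / sq c) *: c)) (- (z / sq c))%:M)) != 0.
    by apply/eqP => /vnz [_ /eqP]; rewrite oner_eq0.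
  apply: (lt_eqr (hp _ hv0)); rewrite He Qsos; last exact: ltW.
  clear hv0 hp hsym He; dexp; field; lra.
exists z, y; split => //.
set b := bet z y.
have hv0 : col_mx (1:R)%:M (col_mx (- b)%:M
    (col_mx (- ((- b) *: sWX o + sWY o + (- ((z * (- b) + y) / sq c)) *: c))
       (- ((z * (- b) + y) / sq c))%:M)) != 0.
  by apply/eqP => /vnz [/eqP]; rewrite oner_eq0.
apply: (lt_eqr (hp _ hv0)); rewrite He Qsos; last exact: ltW.
clear hv0 hp hsym He; dexp.
rewrite /Lr /b /bet; field; lra.
Qed.

Definition bm := k1 o / k0 o.

Lemma obs_facts : posdef (obscov o) ->
  [/\ 0 < k0 o, beta_med o = bm,
      varYperp o = vY o - dot (sWY o) (sWY o) - k1 o ^+ 2 / k0 o &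
      0 < varYperp o].
Proof.
move=> [_ hp].
have hk : 0 < k0 o.
  have hv0 : col_mx (0:R)%:M (col_mx (1:R)%:M (- sWX o)) != 0.
    apply/eqP; rewrite -[0 : 'cV_(1 + _)]col_mx0 => /eq_col_mx [_].
    by rewrite -[0 : 'cV_(1 + _)]col_mx0 => /eq_col_mx [/sc_inj /eqP]; rewrite oner_eq0.
  apply: (lt_eqr (hp _ hv0)); rewrite Qobs k0E hvX hSW qf1; clear hv0 hp; dexp; ring.
have hu : xwcov o \in unitmx.
  apply: pos_unit => w hw.
  by have := hp _ (col_mx_neq0 1 hw); rewrite /obscov qf_sub.
have H : xwcov o *m col_mx (bm%:M) (sWY o - bm *: sWX o) = xwYcov o.
  rewrite /xwcov /xwYcov mul_block_col hvX hSW mul1mx trmulE !mul_mx_scalar scale_scalar_mx.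
  rewrite [bm *: sWX o + _]addrC subrK; congr col_mx; rewrite -raddfD; congr (_%:M).
  have hk' : 0 < 1 - dot (sWX o) (sWX o) by rewrite -k0E.
  clear hp hu; dexp; rewrite /bm k0E k1E; field; lra.
have Hb : beta_med o = bm.
  by rewrite /beta_med /lpcoef -H mulKmx // col_mxKu mxE eqxx mulr1n.
have Hv : varYperp o = vY o - dot (sWY o) (sWY o) - k1 o ^+ 2 / k0 o.
  rewrite /varYperp /qf -mulmxA -[in invmx _ *m _]H mulKmx // /xwYcov tr_col_mx mul_row_col.
  rewrite tr_scalar_mx -scalar_mxM trmulE -raddfD mxE eqxx mulr1n.
  clear hp hu H; dexp; rewrite /bm k1E; rewrite (dotC (sWY o)); field; lra.
split => //; rewrite Hv.
have hv0 : col_mx (1:R)%:M (col_mx (- bm)%:M (bm *: sWX o - sWY o)) != 0.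
  apply/eqP; rewrite -[0 : 'cV_(1 + _)]col_mx0 => /eq_col_mx [/sc_inj /eqP].
  by rewrite oner_eq0.
apply: (lt_eqr (hp _ hv0)); rewrite Qobs hvX hSW qf1; clear hv0 hp hu H Hv Hb.
dexp; rewrite /bm k1E k0E in hk *; rewrite (dotC (sWY o) (sWX o)); field; lra.
Qed.
Lemma nrm_sq n (c : 'cV[R]_n) : nrm c ^+ 2 = dot c c.
Proof. by rewrite /nrm sqr_sqrtr // dot_ge0. Qed.

Lemma sqE c : Num.sqrt (1 - nrm c ^+ 2) = sq c.
Proof. by rewrite nrm_sq. Qed.

Lemma rsqrt (r D : R) : 0 <= r -> r * Num.sqrt D = Num.sqrt (r ^+ 2 * D).
Proof. by move=> hr; rewrite sqrtrM ?sqr_ge0 // sqrtr_sqr ger0_norm. Qed.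

Lemma sqrt_le1 (u D r : R) : 0 <= r -> 0 <= D -> u <= r ^+ 2 * D ->
  Num.sqrt u <= r * Num.sqrt D.
Proof.
move=> hr hD hu; rewrite rsqrt // ler_sqrt //; exact: mulr_ge0 (sqr_ge0 _) hD.
Qed.

Lemma sqrt_le2 (u D r : R) : 0 <= r -> 0 <= D -> 0 <= u ->
  Num.sqrt u <= r * Num.sqrt D -> u <= r ^+ 2 * D.
Proof.
move=> hr hD hu; rewrite rsqrt // ler_sqrt //; exact: mulr_ge0 (sqr_ge0 _) hD.
Qed.

Lemma nrmZ n k (v : 'cV[R]_n) : nrm (k *: v) = `|k| * nrm v.
Proof. by rewrite /nrm nrm2E dotZl dotZr mulrA -expr2 sqrtrM ?sqr_ge0 // sqrtr_sqr. Qed.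

Lemma gap z y : posdef (obscov o) -> 0 < k0 o - z ^+ 2 ->
  devsq o z - (bet z y - beta_med o) ^+ 2 = Lr z y * z ^+ 2 / (k0 o * (k0 o - z ^+ 2)).
Proof.
move=> hpo hkz; have [hk0 -> Hv _] := obs_facts hpo.
rewrite /devsq Hv /Lr /bet /bm; field; lra.
Qed.

Lemma kap c z y : dot c c < 1 -> 0 < k0 o - z ^+ 2 ->
  k1 o - bet z y * k0 o = z * sq c * nn c z y.
Proof.
move=> hc hkz; have hs := hs_pos hc.
rewrite /nn /bet; field; lra.
Qed.

Lemma vfun_mk c z y : dot c c < 1 -> 0 < k0 o - z ^+ 2 ->
  vfun o z c (bet z y) = (z * sq c) *: (sWY o - bet z y *: sWX o - nn c z y *: c).
Proof.
move=> hc hkz; rewrite /vfun sqE (@kap c z y hc hkz) scalerBr scalerA.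
by rewrite !scalerBr !scalerA.
Qed.

Lemma pfun_mk c z (rX : R) : dot c c < 1 ->
  pfun o z c rX = rX ^+ 2 * (sq c ^+ 2 * dot (sWX o - (z / sq c) *: c) (sWX o - (z / sq c) *: c)) - z ^+ 2.
Proof.
move=> hc; have hs := hs_pos hc.
rewrite /pfun sqE nrm2E; congr (_ * _ - _).
have -> : sq c *: sWX o - z *: c = sq c *: (sWX o - (z / sq c) *: c).
  by rewrite scalerBr scalerA mulrC divfK ?gt_eqF.
by rewrite dotZl dotZr mulrA -expr2.
Qed.

Lemma vnorm z b c c' : dot c' c' = dot c c -> dot (sWX o) c' = dot (sWX o) c ->
  z * (k1 o - b * k0 o) * (dot (sWY o) c' - dot (sWY o) c) <= 0 ->
  nrm2 (vfun o z c b) <= nrm2 (vfun o z c' b).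
Proof.
move=> E1 E2 E3; rewrite /vfun !sqE /sq E1 !nrm2E.
set s := Num.sqrt _; have hs : 0 <= s := sqrtr_ge0 _.
dexp; rewrite !(dotC c) !(dotC c') E1 E2.
have E3' : 0 <= - (z * (k1 o - b * k0 o) * (dot (sWY o) c' - dot (sWY o) c)) by rewrite oppr_ge0.
have hh := mulr_ge0 hs E3'.
nra.
Qed.
Lemma ltsq z : - Num.sqrt (k0 o) < z < Num.sqrt (k0 o) -> 0 < k0 o - z ^+ 2.
Proof.
move=> /andP [h1 h2].
have hS : 0 < Num.sqrt (k0 o) by lra.
have hk : 0 <= k0 o by move: hS; rewrite sqrtr_gt0 => /ltW.
have hs := sqr_sqrtr hk.
have ha : 0 < Num.sqrt (k0 o) - z by lra.
have hb : 0 < z + Num.sqrt (k0 o) by lra.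
have hh := mulr_gt0 ha hb.
nra.
Qed.
Lemma sqlt z : 0 < k0 o - z ^+ 2 -> - Num.sqrt (k0 o) < z < Num.sqrt (k0 o).
Proof.
move=> h; have hz := sqr_ge0 z.
have hk : 0 < k0 o by lra.
rewrite -ltr_norml -sqrtr_sqr ltr_sqrt //; lra.
Qed.

Lemma dir_le rX cl cu bl : posdef (obscov o) -> 0 <= rX ->
  (rY_bf o rX cl cu bl <= rY_opt o rX cl cu bl)%E.
Proof.
move=> hpo hrX; have [hk0 Hb Hv hsig] := obs_facts hpo.
apply: le_ereal_inf_tmp => x [z [c1 [c2 [b /= [hz hb hp hdev [/andP [hcl hcu] hc1 ->]]]]]].
set c := c1 *: sWY o + c2 *: sWX o in hp hdev hcl hcu hc1 *.
rewrite /rY_low; case: ifPn => hv; last by rewrite leey.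
apply: ereal_inf_lbound.
have hcc : dot c c < 1 by have hn0 : 0 <= nrm c := sqrtr_ge0 _; rewrite -nrm_sq; nra.
have hkz := ltsq hz.
have hz0 : z != 0.
  apply/eqP => hz0; move: hdev; rewrite hz0 /devsq expr0n /= mul0r mulr0.
  by rewrite ltNge sqr_ge0.
pose y := (k1 o - b * k0 o + b * z ^+ 2) / z.
have hbet : bet z y = b by rewrite /bet /y; field; rewrite hz0 /=; lra.
have hL : 0 < Lr z y.
  have := gap y hpo hkz; rewrite hbet => E.
  have : 0 < Lr z y * z ^+ 2 / (k0 o * (k0 o - z ^+ 2)) by rewrite -E subr_gt0.
  rewrite -mulrA pmulr_lgt0 // divr_gt0 // ?exprn_even_gt0 // mulr_gt0 //.
have hpd := mk_pd hcc hkz hL.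
have [hpi1 hpi2] := pi_mk hcc hpd.
have [hbl hg1 hg2] := long_mk hcc hkz hpd.
have hs := hs_pos hcc.
exists (`|k1 o - b * k0 o| / nrm (vfun o z c b)) => //.
split; first by rewrite divr_ge0 // /nrm sqrtr_ge0.
exists b; split => //.
exists (mk c z y); split => //; split => //; split; [|split; [|split]].
- rewrite /A_rx hpi1 hpi2 hSW qf1 /= mulr1.
  apply: sqrt_le1 => //; first exact: dot_ge0.
  move: hp; rewrite pfun_mk // subr_ge0 expr_div_n => hp.
  rewrite ler_pdivrMr ?exprn_gt0 //; lra.
- rewrite /A_ry hg1 hg2 hSW qf1 /= mulr1 sqrtr_sqr.
  rewrite -hbet in hv *; rewrite vfun_mk // in hv *; rewrite (@kap c z y hcc hkz).
  rewrite nrmZ (normrM (z * sq c)) /nrm nrm2E.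
  set gam := (sWY o - _ - _) in hv *.
  have hg : gam != 0 by apply: contraNneq hv => ->; rewrite scaler0.
  have hng : 0 < Num.sqrt (dot gam gam) by rewrite sqrtr_gt0 dot_gt0.
  have hzs : 0 < `|z * sq c| by rewrite normr_gt0 mulf_neq0 // gt_eqF.
  set N := Num.sqrt (dot gam gam) in hng *.
  set n := nn c z y.
  rewrite le_eqVlt; apply/orP; left; apply/eqP; field.
  by rewrite !gt_eqF.
- by rewrite /A_c RW_mk hcl hcu.
- by rewrite -hbet; exact: hbl.
Qed.
Lemma pfun_same z c c' rX : dot c' c' = dot c c -> dot (sWX o) c' = dot (sWX o) c ->
  pfun o z c' rX = pfun o z c rX.
Proof.
move=> E1 E2; rewrite /pfun !sqE /sq E1 !nrm2E.
by dexp; rewrite !(dotC c) !(dotC c') E1 E2.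
Qed.

Lemma dir_ge rX cl cu bl : posdef (obscov o) -> sWX o != 0 ->
  (forall p q : R, p *: sWY o + q *: sWX o = 0 -> p = 0 /\ q = 0) ->
  0 <= rX -> bl < beta_med o ->
  (rY_opt o rX cl cu bl <= rY_bf o rX cl cu bl)%E.
Proof.
move=> hpo ha hind hrX hbl; have [hk0 Hb Hv hsig] := obs_facts hpo.
apply: le_ereal_inf_tmp => x [r [hr0 [b [hbb [e [hv2 [hpd [hAx [hAy [hAc hbe]]]]]]]]] <-].
have [z [y [He hcc hkz hL]]] := anal hv2 hpd.
move: hpd hAx hAy hAc hbe; rewrite He; set c := cW e => hpd hAx hAy hAc hbe.
have [hpi1 hpi2] := pi_mk hcc hpd.
have [hbl' hg1 hg2] := long_mk hcc hkz hpd.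
rewrite hbl' in hbe; subst b.
have hs := hs_pos hcc.
have hbm : bet z y < bm by rewrite -Hb; exact: le_lt_trans hbb hbl.
have hz0 : z != 0.
  by apply/eqP => hz0; move: hbm; rewrite hz0 /bet /bm mul0r subr0 expr0n /= subr0 ltxx.
have hkap := @kap c z y hcc hkz.
have hkap0 : 0 < k1 o - bet z y * k0 o.
  have h1 : 0 < k0 o * (bm - bet z y) by rewrite mulr_gt0 // subr_gt0.
  apply: (lt_eqr h1); rewrite /bm; field; lra.
move: hAx; rewrite /A_rx hpi1 hpi2 hSW qf1 /= mulr1 => hAx.
have hAx' := sqrt_le2 hrX (dot_ge0 _) (sqr_ge0 _) hAx.
have hpf : 0 <= pfun o z c rX.
  rewrite pfun_mk // subr_ge0; move: hAx'; rewrite expr_div_n ler_pdivrMr ?exprn_gt0 //.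
  lra.
move: hAy; rewrite /A_ry hg1 hg2 hSW qf1 /= mulr1 sqrtr_sqr => hAy.
set gam := sWY o - bet z y *: sWX o - nn c z y *: c in hAy.
set N := Num.sqrt (dot gam gam) in hAy.
have hnn : nn c z y != 0.
  by apply/eqP => h0; move: hkap0; rewrite hkap h0 mulr0 ltxx.
have hN : 0 < N.
  rewrite lt_neqAle sqrtr_ge0 andbT eq_sym; apply/eqP => N0.
  by move: hAy; rewrite N0 mulr0 normr_le0 (negPf hnn).
have [c1 [c2 [E1 E2 E3]]] := reduce c (z * (k1 o - bet z y * k0 o)) ha hind.
set c' := c1 *: sWY o + c2 *: sWX o in E1 E2 E3.
have hcc' : dot c' c' < 1 by rewrite E1.
apply: (@le_trans _ _ (rY_low o z c' (bet z y))).
  apply: ereal_inf_lbound; exists z, c1, c2, (bet z y) => /=; split.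
  - exact: sqlt.
  - exact: hbb.
  - by rewrite (pfun_same _ _ E1 E2).
  - have := gap y hpo hkz => E; rewrite -subr_gt0 E.
    have hz2 : 0 < z ^+ 2 by rewrite exprn_even_gt0.
    by rewrite divr_gt0 // mulr_gt0.
  - split.
    + move: hAc; rewrite /A_c RW_mk /nrm !nrm2E.
      by rewrite -/c' E1.
    + have hn0 : 0 <= nrm c' := sqrtr_ge0 _.
      have := nrm_sq c'; nra.
    + by [].
have hv : nrm2 (vfun o z c (bet z y)) = (z * sq c) ^+ 2 * dot gam gam.
  by rewrite vfun_mk // nrm2E dotZl dotZr mulrA -expr2.
have hvpos : 0 < nrm2 (vfun o z c (bet z y)).
  have hg : 0 < dot gam gam by move: hN; rewrite /N sqrtr_gt0.
  have hzs : 0 < (z * sq c) ^+ 2 by rewrite exprn_even_gt0 // mulf_neq0 // gt_eqF.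
  by rewrite hv mulr_gt0.
have hle := vnorm E1 E2 E3.
have hv' : vfun o z c' (bet z y) != 0.
  by apply/eqP => h0; move: hle; rewrite h0 [nrm2 0]nrm2E dot0l; lra.
rewrite /rY_low hv' lee_fin.
have hn1 : nrm (vfun o z c (bet z y)) = `|z * sq c| * N.
  by rewrite /nrm hv sqrtrM ?sqr_ge0 // sqrtr_sqr.
have hn2 : nrm (vfun o z c (bet z y)) <= nrm (vfun o z c' (bet z y)).
  by rewrite /nrm ler_sqrt // ltW // (lt_le_trans hvpos hle).
have hpos1 : 0 < nrm (vfun o z c (bet z y)) by rewrite /nrm sqrtr_gt0.
apply: (@le_trans _ _ (`|k1 o - bet z y * k0 o| / nrm (vfun o z c (bet z y)))).
  apply: ler_wpM2l => //; rewrite lef_pV2 ?posrE //; exact: lt_le_trans hpos1 hn2.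
have hzsN : 0 < `|z * sq c| * N by rewrite mulr_gt0 // normr_gt0 mulf_neq0 // gt_eqF.
rewrite hn1 hkap normrM ler_pdivrMr //.
rewrite mulrCA; exact: ler_wpM2l.
Qed.
Lemma part1 rX cl cu bl : posdef (obscov o) -> sWX o != 0 -> 0 <= rX ->
  0 <= cl -> cl <= cu -> cl < 1 -> beta_med o <= bl ->
  rY_bf o rX cl cu bl = (0%:E)%E.
Proof.
move=> hpo ha hrX hcl0 hclu hcl1 hb.
have [hk0 Hb Hv hsig] := obs_facts hpo.
apply: le_anti; apply/andP; split; last first.
  by apply: le_ereal_inf_tmp => x [r [hr _] <-]; rewrite lee_fin.
apply: ereal_inf_lbound; exists 0 => //; split => //; exists (beta_med o); split => //.
have hna : 0 < nrm (sWX o) by rewrite /nrm sqrtr_gt0 dot_gt0.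
pose c0 := (cl / nrm (sWX o)) *: sWX o.
have hc0 : dot c0 c0 = cl ^+ 2.
  rewrite /c0 dotZl dotZr -nrm_sq; field; lra.
have hcc : dot c0 c0 < 1 by rewrite hc0; nra.
have hkz : 0 < k0 o - 0 ^+ 2 by rewrite expr0n /= subr0.
have hL : 0 < Lr 0 0.
  apply: (lt_eqr hsig); rewrite Hv /Lr /bet; field; lra.
have hpd := mk_pd hcc hkz hL.
have [hpi1 hpi2] := pi_mk hcc hpd.
have [hbl hg1 hg2] := long_mk hcc hkz hpd.
exists (mk c0 0 0); split => //; split => //; split; [|split; [|split]].
- rewrite /A_rx hpi2 mul0r expr0n /= mul0r sqrtr0.
  by rewrite mulr_ge0 // sqrtr_ge0.
- by rewrite /A_ry hg2 /nn mul0r subrr mul0r expr0n /= mul0r sqrtr0 mul0r.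
- rewrite /A_c (RW_mk c0 0 0) /nrm nrm2E hc0 sqrtr_sqr ger0_norm //.
  by rewrite lexx hclu.
- by rewrite hbl Hb /bet /bm !mul0r subr0 expr0n /= subr0.
Qed.

Lemma part2 rX cl cu bl : (bl%:E < B_low o rX cl cu)%E -> rY_bf o rX cl cu bl = +oo%E.
Proof.
move=> hB; apply: le_anti; rewrite leey /=.
apply: le_ereal_inf_tmp => x [r [hr [b [hb [e [h1 [h2 [h3 [h4 [h5 h6]]]]]]]]] <-].
have : (B_low o rX cl cu <= b%:E)%E.
  by apply: ereal_inf_lbound; exists b => //; exists e.
move=> /(lt_le_trans hB); rewrite lte_fin => hbb.
by exfalso; move: hbb; rewrite ltNge hb.
Qed.

Lemma main_sec rX cl cu bl :
  posdef (obscov o) -> sWX o != 0 ->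
  (forall a b : R, a *: sWY o + b *: sWX o = 0 -> a = 0 /\ b = 0) ->
  0 <= rX -> 0 <= cl -> cl <= cu -> cl < 1 ->
  [/\ beta_med o <= bl -> rY_bf o rX cl cu bl = (0%:E)%E,
      (bl%:E < B_low o rX cl cu)%E -> rY_bf o rX cl cu bl = +oo%E
    & (B_low o rX cl cu <= bl%:E)%E -> bl < beta_med o ->
        rY_bf o rX cl cu bl = rY_opt o rX cl cu bl].
Proof.
move=> hpo ha hind hrX hcl0 hclu hcl1; split.
- exact: part1.
- exact: part2.
- move=> _ hbl; apply: le_anti; rewrite dir_le //.
  exact: dir_ge.
Qed.
End Main.

Unset Implicit Arguments.
Theorem mainTheorem3 (R : realType) (d : nat) (o : obsmom R d) (rX cl cu bl : R) :
  (2 <= d)%N ->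
  posdef (obscov o) ->
  sWX o != 0 ->
  vX o = 1 -> SW o = 1%:M ->
  (forall a b : R, a *: sWY o + b *: sWX o = 0 -> a = 0 /\ b = 0) ->
  0 <= rX ->
  0 <= cl -> cl <= cu -> cu <= 1 -> cl < 1 ->
  [/\ beta_med o <= bl -> rY_bf o rX cl cu bl = (0%:E)%E,
      (bl%:E < B_low o rX cl cu)%E -> rY_bf o rX cl cu bl = +oo%E
    & (B_low o rX cl cu <= bl%:E)%E -> bl < beta_med o ->
        rY_bf o rX cl cu bl = rY_opt o rX cl cu bl].
Proof.
move=> _ hpo ha hvX hSW hind hrX hcl0 hclu _ hcl1.
exact: main_sec.
Qed.
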